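(* Let $(\mathcal{V},\mathcal{E})$ be a finite connected undirected graph that is a tree (each edge usable in both directions, so $(i,j)\in\mathcal{E}$ iff $(j,i)\in\mathcal{E}$), and for $i\in\mathcal{V}$ let $\mathrm{ne}(i)$ be the set of neighbours of $i$ (excluding $i$). Let $\{F^{v}\}_{v\in\mathcal{V}}$ be $d\times d$ matrices. For every ordered edge $(i,j)\in\mathcal{E}$ let $\theta^{i,j}\in\mathbb{R}^{d}$ be given, set $\theta^{i,i}=0$ for all $i$, and for arbitrary nodes $i,j$ joined by the unique tree path $i=j_0,j_1,\dots,j_{m+1}=j$ define $\theta^{i,j}=\theta^{j_0,j_1}+\theta^{j_1,j_2}+\dots+\theta^{j_m,j_{m+1}}$. Define messages for every ordered edge $(i,j)\in\mathcal{E}$ by $m_{1}^{i,j}=F^{i}$, $\ddot m_{1}^{i,j}=F^{i}\theta^{j,i}$, and for $k=2,\dots,K$: $$m_{k}^{i,j}=F^{i}+\sum_{p\in\mathrm{ne}(i)\setminus\{j\}}m_{k-1}^{p,i},\qquad \ddot m_{k}^{i,j}=m_{k}^{i,j}\theta^{j,i}+\sum_{p\in\mathrm{ne}(i)\setminus\{j\}}\ddot m_{k-1}^{p,i}.$$ If $K$ is at least the number of edges on the path between the two farthest nodes of the network (the diameter of the tree), then for every node $r\in\mathcal{V}$, $$\sum_{v\in\mathcal{V}}F^{v}=F^{r}+\sum_{j\in\mathrm{ne}(r)}m_{K}^{j,r}\qquad\text{and}\qquad \sum_{v\in\mathcal{V}}F^{v}\theta^{r,v}=\sum_{j\in\mathrm{ne}(r)}\ddot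 m_{K}^{j,r}.$$
   Context: This is the message-passing scheme of a sensor network at a fixed time $n$ (the time index is suppressed): $\theta^{i,j}$ plays the role of the (estimated) position of node $i$ in the local coordinate system of node $j$, and the additivity of $\theta$ along paths is the relation $\theta^{i,j}=\theta^{i,j_1}+\theta^{j_1,j_2}+\dots+\theta^{j_m,j}$ for nodes connected through intermediate nodes $j_1,\dots,j_m$. The message $m_k^{i,j}$, $\ddot m_k^{i,j}$ is the one sent from node $i$ to node $j$ at iteration $k$. *)

(* Defs.v *)
From HB Require Import structures.
From mathcomp Require Import all_boot all_order all_algebra.
Set Implicit Arguments. Unset Strict Implicit. Unset Printing Implicit Defensive.
Import Order.TTheory GRing.Theory Num.Theory.
Local Open Scope ring_scope.

Definition undirected (V : finType) (e : rel V) : Prop :=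
  symmetric e /\ irreflexive e.

(* Simple (vertex-repeating-free) e-path from i: i :: p, with p the list of
   subsequent vertices; its endpoint is last i p and it has size p edges. *)
Definition simple_path (V : finType) (e : rel V) (i : V) (p : seq V) : bool :=
  path e i p && uniq (i :: p).

Definition is_tree (V : finType) (e : rel V) : Prop :=
  undirected e /\
  (forall i j : V, connect e i j) /\
  (forall (i : V) (p q : seq V), simple_path e i p -> simple_path e i q ->
     last i p = last i q -> p = q).

Definition diameter_le (V : finType) (e : rel V) (K : nat) : Prop :=
  forall (i : V) (p : seq V), simple_path e i p -> (size p <= K)%N.

(* theta is given on ordered edges and extended to all pairs of nodes by
   summation along the unique tree path i = j0, j1, ..., j_{m+1} = j;
   in particular theta i i = 0 (empty path). *)
Definition path_additive (R : nzRingType) (d : nat) (V : finType) (e : rel V)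
  (theta : V -> V -> 'cV[R]_d) : Prop :=
  forall (i : V) (p : seq V), simple_path e i p ->
    theta i (last i p) = \sum_(x <- zip (i :: p) p) theta x.1 x.2.

(* Messages m_k^{i,j} (k >= 1; value at k = 0 is an unused dummy). *)
Fixpoint msg (R : nzRingType) (d : nat) (V : finType) (e : rel V)
  (F : V -> 'M[R]_d) (k : nat) (i j : V) {struct k} : 'M[R]_d :=
  match k with
  | 0 => 0
  | 1 => F i
  | k'.+1 => F i + \sum_(p : V | e i p && (p != j)) msg e F k' p i
  end.

(* Messages \ddot m_k^{i,j} (k >= 1; value at k = 0 is an unused dummy). *)
Fixpoint mdd (R : nzRingType) (d : nat) (V : finType) (e : rel V)
  (F : V -> 'M[R]_d) (theta : V -> V -> 'cV[R]_d) (k : nat) (i j : V)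
  {struct k} : 'cV[R]_d :=
  match k with
  | 0 => 0
  | 1 => F i *m theta j i
  | k'.+1 => msg e F k i j *m theta j i
             + \sum_(p : V | e i p && (p != j)) mdd e F theta k' p i
  end.

(* Main.v *)
Require Import Defs.
From HB Require Import structures.
From mathcomp Require Import all_boot all_order all_algebra.
From Stdlib Require Import ClassicalEpsilon.
Import Order.TTheory GRing.Theory Num.Theory.
Local Open Scope ring_scope.
Set Implicit Arguments. Unset Strict Implicit.

Definition reach (V : finType) (e : rel V) (r j : V) (k : nat) (v : V) : Prop :=
  exists q, simple_path e r (j :: q) /\ last j q = v /\ (size q < k)%N.

Definition reachb (V : finType) (e : rel V) r j k v : bool :=
  if excluded_middle_informative (reach e r j k v) then true else false.

Lemma reachbP (V : finType) (e : rel V) r j k v :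
  reflect (reach e r j k v) (reachb e r j k v).
Proof. rewrite /reachb; case: excluded_middle_informative => H; by constructor. Qed.

Definition uniqP_tree (V : finType) (e : rel V) := forall (i : V) (p q : seq V),
  simple_path e i p -> simple_path e i q -> last i p = last i q -> p = q.

Lemma reach_uniq (V : finType) (e : rel V) (Hu : uniqP_tree e) r j j' k k' v :
  reach e r j k v -> reach e r j' k' v -> j = j'.
Proof.
move=> [q [Hq [Hl _]]] [q' [Hq' [Hl' _]]].
have := Hu r _ _ Hq Hq'; rewrite /= Hl Hl' => /(_ erefl); by case.
Qed.

Lemma reach_neq (V : finType) (e : rel V) r j k v : reach e r j k v -> v != r.
Proof.
move=> [q [/andP[_ Hu] [<- _]]].
move: Hu; rewrite cons_uniq => /andP[Hr _].
apply/eqP => E; by rewrite -E mem_last in Hr.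
Qed.

Lemma reach_base (V : finType) (e : rel V) (Hi : irreflexive e) r i k :
  e r i -> reach e r i k.+1 i.
Proof.
move=> eri; exists [::]; split => //.
rewrite /simple_path /= eri /= inE andbT.
by apply/eqP => E; subst; rewrite Hi in eri.
Qed.

Lemma reach_ext (V : finType) (e : rel V) (Hs : symmetric e) (Hi : irreflexive e)
  (Hu : uniqP_tree e) r i p k v :
  e r i -> reach e i p k v -> p != r -> reach e r i k.+1 v.
Proof.
move=> eri [q [/andP[Hp Hq] [Hl Hk]]] pr.
exists (p :: q); split; last by split.
apply/andP; split; first by rewrite /= eri.
rewrite cons_uniq Hq andbT.
rewrite in_cons negb_or; apply/andP; split.
  by apply/eqP => E; subst; rewrite Hi in eri.
rewrite in_cons negb_or eq_sym pr /=.
apply/negP => Hrq.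
move: Hp Hq; case/path.splitP: Hrq => q1 q2 Hp Hq.
have H1 : simple_path e i (p :: rcons q1 r).
  rewrite /simple_path; move: Hp Hq; rewrite -!cat_cons cat_path cat_uniq => /andP[-> _] /andP[-> _] //.
have H2 : simple_path e i [:: r].
  rewrite /simple_path /= Hs eri /= inE andbT.
  by apply/eqP => E; subst; rewrite Hi in eri.
have := Hu i _ _ H1 H2; rewrite -rcons_cons last_rcons /= => /(_ erefl).
case=> _ /eqP; by rewrite -size_eq0 size_rcons.
Qed.

Lemma reach_dec (V : finType) (e : rel V) r i k v : reach e r i k.+1 v -> v != i ->
  exists2 p, e i p && (p != r) & reach e i p k v.
Proof.
move=> [[|p q] [/andP[Hp Hu] [Hl Hk]]] vi; first by rewrite -Hl eqxx in vi.
move: Hp => /= /andP[_ /andP[eip Hp]].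
move: Hu; rewrite cons_uniq => /andP[Hr Hu].
exists p.
  rewrite eip /=; apply: contraNneq Hr => ->; by rewrite !inE eqxx orbT.
exists q; split => //; by rewrite /simple_path /= eip Hp.
Qed.

Lemma reach_root (V : finType) (e : rel V) (Hc : forall i j : V, connect e i j) K
  (Hd : diameter_le e K) r v :
  v != r -> exists2 j, e r j & reach e r j K v.
Proof.
move=> vr; case/connectP: (Hc r v) => p Hp Hv.
move: Hv; case/shortenP: Hp => p' Hp' Hu _ Hv.
case: p' Hp' Hu Hv => [|j q] Hp' Hu Hv; first by rewrite Hv eqxx in vr.
move: (Hp') => /= /andP[erj _].
exists j => //.
have Hs : simple_path e r (j :: q) by rewrite /simple_path Hp' Hu.
exists q; split => //; split => //.
by have := Hd _ _ Hs.
Qed.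

Lemma reach_theta (R : nzRingType) (d : nat) (V : finType) (e : rel V)
  (theta : V -> V -> 'cV[R]_d) (Hpa : path_additive e theta) j i k v :
  reach e j i k v -> theta j v = theta j i + theta i v.
Proof.
move=> [q [Hs [Hl _]]].
have := Hpa _ _ Hs; rewrite /= Hl big_cons /= => ->.
congr (_ + _); rewrite -Hl (Hpa i q) //.
move: Hs => /andP[/= /andP[_ Hp] Hu]; apply/andP; split=> //.
by move: Hu; rewrite cons_uniq => /andP[].
Qed.

Lemma step_sum (V : finType) (e : rel V) (Hs : symmetric e) (Hi : irreflexive e)
  (Hu : uniqP_tree e) (M : nmodType) (G : V -> M) i j k :
  e j i ->
  \sum_(v | reachb e j i k.+1 v) G v =
  G i + \sum_(p | e i p && (p != j)) \sum_(v | reachb e i p k v) G v.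
Proof.
move=> eji.
rewrite (bigD1 i) /=; last by apply/reachbP; apply: reach_base.
congr (_ + _).
rewrite (exchange_big_dep (fun v => reachb e j i k.+1 v && (v != i))) /=; last first.
  move=> p v /andP[eip pj] /reachbP Hr; apply/andP; split.
    by apply/reachbP; apply: (reach_ext Hs Hi Hu _ Hr).
  exact: reach_neq Hr.
apply: eq_bigr => v /andP[/reachbP Hv vi].
have [p0 /andP[eip0 p0j] Hp0] := reach_dec Hv vi.
rewrite (bigD1 p0) /=; last by rewrite eip0 p0j; apply/reachbP.
rewrite big1 ?addr0 // => p /andP[/andP[_ /reachbP Hp] pp0].
by rewrite (reach_uniq Hu Hp Hp0) eqxx in pp0.
Qed.

Lemma root_sum (V : finType) (e : rel V) (Hu : uniqP_tree e)
  (Hc : forall i j : V, connect e i j) K (Hd : diameter_le e K)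
  (M : nmodType) (G : V -> M) r :
  \sum_(v : V) G v = G r + \sum_(j | e r j) \sum_(v | reachb e r j K v) G v.
Proof.
rewrite (bigD1 r) //=; congr (_ + _).
rewrite (exchange_big_dep (fun v => true && (v != r))) /=; last first.
  by move=> j v _ /reachbP Hr; exact: reach_neq Hr.
apply: eq_bigr => v vr.
have [j0 erj0 Hj0] := reach_root Hc Hd vr.
rewrite (bigD1 j0) /=; last by rewrite erj0; apply/reachbP.
rewrite big1 ?addr0 // => p /andP[/andP[_ /reachbP Hp] pp0].
by rewrite (reach_uniq Hu Hp Hj0) eqxx in pp0.
Qed.

Lemma msgS (R : nzRingType) (d : nat) (V : finType) (e : rel V)
  (F : V -> 'M[R]_d) k i j :
  msg e F k.+2 i j = F i + \sum_(p : V | e i p && (p != j)) msg e F k.+1 p i.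
Proof. by []. Qed.

Lemma mddS (R : nzRingType) (d : nat) (V : finType) (e : rel V)
  (F : V -> 'M[R]_d) (theta : V -> V -> 'cV[R]_d) k i j :
  mdd e F theta k.+2 i j = msg e F k.+2 i j *m theta j i
             + \sum_(p : V | e i p && (p != j)) mdd e F theta k.+1 p i.
Proof. by []. Qed.

Unset Implicit Arguments. Set Strict Implicit.
Theorem lemma1 (R : realFieldType) (d : nat) (V : finType) (e : rel V)
  (F : V -> 'M[R]_d) (theta : V -> V -> 'cV[R]_d) (K : nat) :
  is_tree e ->
  path_additive e theta ->
  diameter_le e K ->
  forall r : V,
    \sum_(v : V) F v = F r + \sum_(j : V | e r j) msg e F K j r /\
    \sum_(v : V) F v *m theta r v = \sum_(j : V | e r j) mdd e F theta K j r.
Proof.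
move=> [[Hs Hi] [Hc Hu]] Hpa Hd r.
have Hmsg : forall k i j, e j i ->
    msg e F k.+1 i j = \sum_(v | reachb e j i k.+1 v) F v.
  elim=> [|k IH] i j eji.
    rewrite (step_sum Hs Hi Hu) // big1 ?addr0 // => p _.
    by apply: big_pred0 => v; apply/reachbP => -[q [_ [_]]].
  rewrite msgS (step_sum Hs Hi Hu) //; congr (_ + _).
  by apply: eq_bigr => p /andP[eip _]; apply: IH.
have Hmdd : forall k i j, e j i ->
    mdd e F theta k.+1 i j = \sum_(v | reachb e j i k.+1 v) F v *m theta j v.
  elim=> [|k IH] i j eji.
    rewrite (step_sum Hs Hi Hu (fun v => F v *m theta j v)) // big1 ?addr0 // => p _.
    by apply: big_pred0 => v; apply/reachbP => -[q [_ [_]]].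
  rewrite mddS.
  rewrite [RHS](eq_bigr (fun v => F v *m theta j i + F v *m theta i v)); last first.
    by move=> v /reachbP Hv; rewrite (reach_theta Hpa Hv) mulmxDr.
  rewrite big_split -mulmx_suml -Hmsg //; congr (_ + _).
  have Hii : theta i i = 0.
    have := Hpa i [::]; rewrite /= big_nil; apply.
    by rewrite /simple_path /= ?andbT.
  rewrite (step_sum Hs Hi Hu (fun v => F v *m theta i v)) // Hii mulmx0 add0r.
  by apply: eq_bigr => p /andP[eip _]; rewrite IH.
have HK : forall j, e r j -> (0 < K)%N.
  move=> j erj; have := Hd r [:: j]; apply.
  rewrite /simple_path /= erj /= inE andbT.
  by apply/eqP => E; subst; rewrite Hi in erj.
split.
  rewrite (root_sum Hu Hc Hd F r); congr (_ + _).
  apply: eq_bigr => j erj; rewrite -(prednK (HK j erj)) Hmsg //.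
rewrite (root_sum Hu Hc Hd (fun v => F v *m theta r v) r).
have Hrr : theta r r = 0.
  have := Hpa r [::]; rewrite /= big_nil; apply.
  by rewrite /simple_path /= ?andbT.
rewrite Hrr mulmx0 add0r.
apply: eq_bigr => j erj; rewrite -(prednK (HK j erj)) Hmdd //.
Qed.
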